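(* In the reachability strategy-improvement algorithm described in the context, for all $i\ge0$ the player-1 selector $\gamma_i$ obtained at iteration $i$ is proper.
   Context: Concurrent game structure $G=(S,M,\Gamma_1,\Gamma_2,\delta)$: finite states, finite moves, nonempty move sets $\Gamma_i(s)$, $\delta(s,a_1,a_2)\in\mathrm{Distr}(S)$ (simultaneous independent moves). Selectors assign to each state a distribution on available moves; $\overline{\xi}$ is the memoryless strategy playing $\xi$ forever; $\Pr_s^{\pi_1,\pi_2}$ is the induced measure on plays; $\mathrm{Reach}(X)$: plays visiting $X$. $\mathrm{val}_1^{\pi_1}(\mathrm{Reach}(T))(s)=\inf_{\pi_2}\Pr_s^{\pi_1,\pi_2}(\mathrm{Reach}(T))$, $\mathrm{val}_1(\mathrm{Reach}(T))=\sup_{\pi_1}\mathrm{val}_1^{\pi_1}(\mathrm{Reach}(T))$. For a valuation $v:S\to[0,1]$: $\mathrm{Pre}_{\xi_1,\xi_2}(v)(s)=\sum_{a,b}\sum_tv(t)\delta(s,a,b)(t)\xi_1(s)(a)\xi_2(s)(b)$, $\mathrm{Pre}_{1:\xi_1}(v)(s)=\inf_{\xi_2}\mathrm{Pre}_{\xi_1,\xi_2}(v)(s)$, $\mathrm{Pre}_1(v)(s)=\sup_{\xi_1}\mathrm{Pre}_{1:\xi_1}(v)(s)$. Fix $T\subseteq S$, $W_2=\{s:\mathrm{val}_1(\mathrm{Reach}(T))(s)=0\}$; all states of $T\cup W_2$ are absorbing. A player-1 strategy is proper if, against every player-2 strategy, from every $s\in S\setminus(T\cup W_2)$, $T\cup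 W_2$ is reached with probability 1; a selector $\xi$ is proper if $\overline{\xi}$ is. The algorithm: $\gamma_0$ is the uniform selector on $\Gamma_1(s)$, $v_i=\mathrm{val}_1^{\overline{\gamma}_i}(\mathrm{Reach}(T))$. At iteration $i$: $I=\{s\in S\setminus(T\cup W_2):\mathrm{Pre}_1(v_i)(s)>v_i(s)\}$; $\xi_1$ is a selector with $\mathrm{Pre}_{1:\xi_1}(v_i)(s)=\mathrm{Pre}_1(v_i)(s)$ for $s\in I$; $\gamma_{i+1}(s)=\gamma_i(s)$ for $s\notin I$ and $\gamma_{i+1}(s)=\xi_1(s)$ for $s\in I$; stop when $I=\emptyset$. *)

(* Defs.v *)
From HB Require Import structures.
From mathcomp Require Import all_boot all_order all_algebra.
From mathcomp Require Import boolp classical_sets reals.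
Set Implicit Arguments. Unset Strict Implicit. Unset Printing Implicit Defensive.
Import Order.TTheory GRing.Theory Num.Theory.
Local Open Scope ring_scope.

Record cgame (R : realType) (S M : finType) := CGame {
  Gam1 : S -> {set M};
  Gam2 : S -> {set M};
  delta : S -> M -> M -> S -> R;
  Gam1_nonempty : forall s, Gam1 s != finset.set0;
  Gam2_nonempty : forall s, Gam2 s != finset.set0;
  delta_ge0 : forall s a b t, 0 <= delta s a b t;
  delta_sum1 : forall s a b, \sum_(t : S) delta s a b t = 1 }.

Section Game.
Variables (R : realType) (S M : finType) (G : cgame R S M).

Definition distr_on (A : {set M}) (d : M -> R) : Prop :=
  (forall a, 0 <= d a) /\ (forall a, a \notin A -> d a = 0) /\
  \sum_(a : M) d a = 1.

Definition selector1 (xi : S -> M -> R) : Prop := forall s, distr_on (Gam1 G s) (xi s).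
Definition selector2 (xi : S -> M -> R) : Prop := forall s, distr_on (Gam2 G s) (xi s).

(* strategies: history (past states h, current state s) -> distribution on moves *)
Definition strategy1 (pi : seq S -> S -> M -> R) : Prop :=
  forall h s, distr_on (Gam1 G s) (pi h s).
Definition strategy2 (pi : seq S -> S -> M -> R) : Prop :=
  forall h s, distr_on (Gam2 G s) (pi h s).

Definition memless (xi : S -> M -> R) : seq S -> S -> M -> R := fun _ s => xi s.

Fixpoint reach_within (pi1 pi2 : seq S -> S -> M -> R) (X : {set S})
    (n : nat) (h : seq S) (s : S) : R :=
  if s \in X then 1 else
  match n with
  | 0 => 0
  | n'.+1 => \sum_(a : M) \sum_(b : M) \sum_(t : S)
       pi1 h s a * pi2 h s b * delta G s a b t *
       reach_within pi1 pi2 X n' (rcons h s) t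
  end.

(* Pr_s^{pi1,pi2}(Reach X): measure of the increasing union of the events
   "X visited within n steps" *)
Definition PrReach (pi1 pi2 : seq S -> S -> M -> R) (X : {set S}) (s : S) : R :=
  sup [set reach_within pi1 pi2 X n [::] s | n in [set: nat]]%classic.

Definition val1_strat (pi1 : seq S -> S -> M -> R) (T : {set S}) (s : S) : R :=
  inf [set PrReach pi1 pi2 T s | pi2 in strategy2]%classic.

Definition val1 (T : {set S}) (s : S) : R :=
  sup [set val1_strat pi1 T s | pi1 in strategy1]%classic.

Definition W2 (T : {set S}) : {set S} := [set s | val1 T s == 0].

Definition Pre12 (xi1 xi2 : S -> M -> R) (v : S -> R) (s : S) : R :=
  \sum_(a : M) \sum_(b : M) \sum_(t : S) v t * delta G s a b t * xi1 s a * xi2 s b.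

Definition Pre1_sel (xi1 : S -> M -> R) (v : S -> R) (s : S) : R :=
  inf [set Pre12 xi1 xi2 v s | xi2 in selector2]%classic.

Definition Pre1 (v : S -> R) (s : S) : R :=
  sup [set Pre1_sel xi1 v s | xi1 in selector1]%classic.

Definition absorbing (s : S) : Prop :=
  forall a b, a \in Gam1 G s -> b \in Gam2 G s -> delta G s a b s = 1.

Definition proper_strat (T : {set S}) (pi1 : seq S -> S -> M -> R) : Prop :=
  forall pi2, strategy2 pi2 ->
  forall s, s \notin T :|: W2 T -> PrReach pi1 pi2 (T :|: W2 T) s = 1.

Definition proper_sel (T : {set S}) (xi : S -> M -> R) : Prop :=
  proper_strat T (memless xi).

Definition unif_sel (s : S) (a : M) : R :=
  if a \in Gam1 G s then (#|Gam1 G s|%:R)^-1 else 0.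

Definition vof (T : {set S}) (gam : S -> M -> R) : S -> R :=
  val1_strat (memless gam) T.

Definition improv (T : {set S}) (v : S -> R) : {set S} :=
  [set s | (s \notin T :|: W2 T) && (v s < Pre1 v s)].

(* one iteration of the strategy-improvement algorithm:
   gam' is a possible gamma_{i+1} computed from gam = gamma_i *)
Definition improve_step (T : {set S}) (gam gam' : S -> M -> R) : Prop :=
  let v := vof T gam in
  let I := improv T v in
  exists xi1, selector1 xi1 /\
    (forall s, s \in I -> Pre1_sel xi1 v s = Pre1 v s) /\
    (forall s, s \notin I -> gam' s = gam s) /\
    (forall s, s \in I -> gam' s = xi1 s).

End Game.

(* Main.v *)
Require Import Defs.
From HB Require Import structures.
From mathcomp Require Import all_boot all_order all_algebra.
From mathcomp Require Import boolp classical_sets reals.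
From mathcomp Require Import ring lra.
Import Order.TTheory GRing.Theory Num.Theory.
Local Open Scope ring_scope.
Set Implicit Arguments. Unset Strict Implicit. Unset Printing Implicit Defensive.

Section Aux.
Variable R : realType.

Lemma sup_ge (E : set R) b y : (forall z, E z -> z <= b) -> E y -> y <= sup E.
Proof. by move=> hb Ey; apply: sup_upper_bound => //; split; [exists y | exists b]. Qed.

Lemma inf_le (E : set R) b y : (forall z, E z -> b <= z) -> E y -> inf E <= y.
Proof. by move=> hb Ey; apply: ge_inf => //; exists b. Qed.

Lemma lim_one (beta p : R) : 0 <= beta -> beta < 1 -> p <= 1 ->
  (forall k, 1 - beta ^+ k <= p) -> p = 1.
Proof.
move=> b0 b1 p1 hk; apply/eqP; rewrite eq_le p1 /=; rewrite leNgt; apply/negP => hp.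
set d := 1 - beta. have d0 : 0 < d by rewrite subr_gt0.
set e := 1 - p. have e0 : 0 < e by rewrite subr_gt0.
have bern : forall k : nat, beta ^+ k * (1 + k%:R * d) <= 1.
  elim=> [|k IH]; first by rewrite expr0 mul0r addr0 mulr1.
  have bk : 0 <= beta ^+ k by rewrite exprn_ge0.
  have k0 : 0 <= (k%:R : R) by rewrite ler0n.
  have h1 : 0 <= beta ^+ k * k%:R * d * d by rewrite !mulr_ge0 // ltW.
  have h2 : 0 <= beta ^+ k * d * d by rewrite !mulr_ge0 // ltW.
  rewrite exprSr -natr1.
  move: IH h1 h2; set x := beta ^+ k; set kk := (k%:R : R) => IH h1 h2.
  have -> : beta = 1 - d by rewrite /d opprB addrC subrK.
  have E : x * (1 - d) * (1 + (kk + 1) * d) = x * (1 + kk * d) - (x * kk * d * d + x * d * d) by ring.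
  lra.
have hek : forall k : nat, e * (1 + k%:R * d) <= 1.
  move=> k; apply: le_trans (bern k); apply: ler_wpM2r.
    by rewrite addr_ge0 // mulr_ge0 // ?ler0n ltW.
  by rewrite /e lerBlDr addrC -lerBlDr hk.
have ed0 : 0 < e * d by rewrite mulr_gt0.
have ied : 0 <= (e * d)^-1 by rewrite invr_ge0 ltW.
have := archi_boundP ied; set n := Num.Def.archi_bound _ => hn.
have := hek n. have : 1 < e * (n%:R * d).
  have -> : e * (n%:R * d) = (e * d) * n%:R by ring.
  by rewrite -[X in X < _](mulfV (lt0r_neq0 ed0)) ltr_pM2l.
move=> h h'. have : e * (1 + n%:R * d) = e + e * (n%:R * d) by ring. lra.
Qed.

End Aux.

Section Game.
Variables (R : realType) (S M : finType) (G : cgame R S M).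
Local Notation rw := (reach_within G).

Lemma distr_ge0 (A : {set M}) (d : M -> R) : distr_on A d -> forall a, 0 <= d a.
Proof. by case. Qed.

Lemma distr_sum (A : {set M}) (d : M -> R) : distr_on A d -> \sum_a d a = 1.
Proof. by case=> _ []. Qed.

Lemma distr_le1 (A : {set M}) (d : M -> R) a : distr_on A d -> d a <= 1.
Proof.
move=> hd; rewrite -(distr_sum hd) (bigD1 a) //= lerDl.
by apply: sumr_ge0 => i _; apply: (distr_ge0 hd).
Qed.

Lemma delta_le1 s a b t : delta G s a b t <= 1.
Proof.
rewrite -(delta_sum1 G s a b) (bigD1 t) //= lerDl.
by apply: sumr_ge0 => i _; apply: delta_ge0.
Qed.

Lemma wsum1 (p q : M -> R) s : \sum_a p a = 1 -> \sum_b q b = 1 ->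
  \sum_a \sum_b \sum_t p a * q b * delta G s a b t = 1.
Proof.
move=> hp hq; rewrite -[RHS]hp; apply: eq_bigr => a _.
transitivity (\sum_b p a * q b); last by rewrite -mulr_sumr hq mulr1.
by apply: eq_bigr => b _; rewrite -mulr_sumr delta_sum1 mulr1.
Qed.

Lemma wsum2 (p : M -> R) s b : \sum_a p a = 1 ->
  \sum_a \sum_t p a * delta G s a b t = 1.
Proof.
move=> hp; rewrite -[RHS]hp; apply: eq_bigr => a _.
by rewrite -mulr_sumr delta_sum1 mulr1.
Qed.

Lemma rw_in pi1 pi2 (X : {set S}) n h s : s \in X -> rw pi1 pi2 X n h s = 1.
Proof. by case: n => [|n] /= ->. Qed.

Lemma rw_bounds pi1 pi2 X : strategy1 G pi1 -> strategy2 G pi2 ->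
  forall n h s, 0 <= rw pi1 pi2 X n h s <= 1.
Proof.
move=> h1 h2; elim=> [|n IH] h s /=; case: ifP => _; rewrite ?lexx ?ler01 //.
apply/andP; split.
  apply: sumr_ge0 => a _; apply: sumr_ge0 => b _; apply: sumr_ge0 => t _.
  rewrite !mulr_ge0 ?delta_ge0 ?(distr_ge0 (h1 _ _)) ?(distr_ge0 (h2 _ _)) //.
  by case/andP: (IH (rcons h s) t).
rewrite -(wsum1 s (distr_sum (h1 h s)) (distr_sum (h2 h s))).
apply: ler_sum => a _; apply: ler_sum => b _; apply: ler_sum => t _.
apply: ler_piMr; last by case/andP: (IH (rcons h s) t).
by rewrite !mulr_ge0 ?delta_ge0 ?(distr_ge0 (h1 _ _)) ?(distr_ge0 (h2 _ _)).
Qed.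

Lemma amp pi1 pi2 X m g : strategy1 G pi1 -> strategy2 G pi2 -> 0 <= g ->
  (forall h s, 1 - rw pi1 pi2 X m h s <= g) ->
  forall N h s, 1 - rw pi1 pi2 X (N + m) h s <= (1 - rw pi1 pi2 X N h s) * g.
Proof.
move=> h1 h2 g0 hg; elim=> [|N IH] h s.
  rewrite add0n /=; case: ifP => sX; first by rewrite rw_in // subrr mul0r.
  by rewrite subr0 mul1r.
rewrite addSn /=; case: ifP => sX; first by rewrite subrr mul0r.
set w := fun a b t => pi1 h s a * pi2 h s b * delta G s a b t.
have hw := wsum1 s (distr_sum (h1 h s)) (distr_sum (h2 h s)).
have w0 : forall a b t, 0 <= w a b t.
  by move=> a b t; rewrite !mulr_ge0 ?delta_ge0 ?(distr_ge0 (h1 _ _)) ?(distr_ge0 (h2 _ _)).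
have E : forall f : M -> M -> S -> R, 1 - \sum_a \sum_b \sum_t w a b t * f a b t =
    \sum_a \sum_b \sum_t w a b t * (1 - f a b t).
  move=> f; rewrite -[X in X - _]hw -sumrB; apply: eq_bigr => a _.
  rewrite -sumrB; apply: eq_bigr => b _; rewrite -sumrB; apply: eq_bigr => t _.
  by rewrite mulrBr mulr1.
rewrite (E (fun a b t => rw pi1 pi2 X (N + m) (rcons h s) t)).
rewrite (E (fun a b t => rw pi1 pi2 X N (rcons h s) t)).
rewrite mulr_suml; apply: ler_sum => a _; rewrite mulr_suml; apply: ler_sum => b _.
rewrite mulr_suml; apply: ler_sum => t _; rewrite -[X in _ <= X]mulrA; exact: ler_wpM2l.
Qed.

Lemma amp_iter pi1 pi2 X N beta : strategy1 G pi1 -> strategy2 G pi2 -> 0 <= beta ->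
  (forall h s, 1 - rw pi1 pi2 X N h s <= beta) ->
  forall k h s, 1 - rw pi1 pi2 X (k * N) h s <= beta ^+ k.
Proof.
move=> h1 h2 b0 hb; elim=> [|k IH] h s.
  by rewrite mul0n expr0 /=; case: ifP => _; rewrite ?subrr ?subr0.
rewrite mulSn; apply: le_trans (amp h1 h2 (exprn_ge0 k b0) IH N h s) _.
by rewrite exprS ler_wpM2r // exprn_ge0.
Qed.


Definition dir (bs : S -> M) : S -> M -> R := fun s b => if b == bs s then 1 else 0.

Lemma dir_sel bs : (forall s, bs s \in Gam2 G s) -> selector2 G (dir bs).
Proof.
move=> hb s; split; first by move=> b; rewrite /dir; case: ifP.
split; first by move=> b bG; rewrite /dir; case: eqP => // eb; move: bG; rewrite eb hb.
by rewrite (bigD1 (bs s)) //= /dir eqxx big1 ?addr0 // => b /negbTE ->.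
Qed.

Lemma memless_strat1 gm : selector1 G gm -> strategy1 G (memless gm).
Proof. by move=> hg h s; apply: hg. Qed.

Lemma memless_strat2 gm : selector2 G gm -> strategy2 G (memless gm).
Proof. by move=> hg h s; apply: hg. Qed.

Lemma ex_bs : exists bs : S -> M, forall s, bs s \in Gam2 G s.
Proof.
have : forall s, exists b, b \in Gam2 G s by move=> s; apply/set0Pn/Gam2_nonempty.
by case/choice => bs hbs; exists bs.
Qed.

Lemma ex_strat2 : exists pi2, strategy2 G pi2.
Proof. by have [bs hbs] := ex_bs; exists (memless (dir bs)); apply/memless_strat2/dir_sel. Qed.

Lemma sum_dir bs s (f : M -> R) (g : M -> M -> S -> R) (k : S -> R) :
  \sum_a \sum_b \sum_t f a * dir bs s b * g a b t * k t =
  \sum_a \sum_t f a * g a (bs s) t * k t.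
Proof.
apply: eq_bigr => a _; rewrite (bigD1 (bs s)) //= [X in _ + X]big1 ?addr0.
  by apply: eq_bigr => t _; rewrite /dir eqxx mulr1.
by move=> b /negbTE nb; apply: big1 => t _; rewrite /dir nb mulr0 !mul0r.
Qed.

Lemma trap_zero (X C : {set S}) bs (gm : S -> M -> R) pi1
  (hC : forall s, s \in C -> s \notin X)
  (hcl : forall s a t, s \in C -> 0 < gm s a -> 0 < delta G s a (bs s) t -> t \in C)
  (hsupp : forall h s a, s \in C -> pi1 h s a != 0 -> 0 < gm s a) :
  forall n h s, s \in C -> rw pi1 (memless (dir bs)) X n h s = 0.
Proof.
elim=> [|n IH] h s sC /=; rewrite (negbTE (hC s sC)) //.
rewrite /memless sum_dir; apply: big1 => a _; apply: big1 => t _.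
case: (eqVneq (pi1 h s a) 0) => [->|pa]; first by rewrite !mul0r.
have ga := hsupp h s a sC pa.
case: (eqVneq (delta G s a (bs s) t) 0) => [->|da]; first by rewrite mulr0 mul0r.
have tC : t \in C by apply: (hcl s a t sC ga); rewrite lt0r da delta_ge0.
by rewrite IH // mulr0.
Qed.

Lemma PrReach_bounds pi1 pi2 X s : strategy1 G pi1 -> strategy2 G pi2 ->
  0 <= PrReach G pi1 pi2 X s <= 1.
Proof.
move=> h1 h2; have hb := rw_bounds X h1 h2.
apply/andP; split.
  apply: le_trans (_ : rw pi1 pi2 X 0 [::] s <= _).
    by case/andP: (hb 0%N [::] s).
  apply: (@sup_ge _ _ 1); last by exists 0%N.
  by move=> z [n _ <-]; case/andP: (hb n [::] s).
apply: ge_sup; first by exists (rw pi1 pi2 X 0 [::] s); exists 0%N.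
by move=> z [n _ <-]; case/andP: (hb n [::] s).
Qed.

Lemma PrReach_zero pi1 pi2 X s : (forall n, rw pi1 pi2 X n [::] s = 0) ->
  PrReach G pi1 pi2 X s <= 0.
Proof.
move=> h0; apply: ge_sup; first by exists (rw pi1 pi2 X 0 [::] s); exists 0%N.
by move=> z [n _ <-]; rewrite h0.
Qed.

Lemma val1s_bounds pi1 X s : strategy1 G pi1 ->
  0 <= val1_strat G pi1 X s <= 1.
Proof.
move=> h1; have [p2 hp2] := ex_strat2.
have hb : forall pi2, strategy2 G pi2 -> 0 <= PrReach G pi1 pi2 X s <= 1 by move=> pi2 h2; exact: PrReach_bounds.
apply/andP; split.
  apply: lb_le_inf; first by exists (PrReach G pi1 p2 X s); exists p2.
  by move=> z [pi2 h2 <-]; case/andP: (hb pi2 h2).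
apply: le_trans (_ : PrReach G pi1 p2 X s <= 1); last by case/andP: (hb p2 hp2).
apply: (@inf_le _ _ 0); last by exists p2.
by move=> z [pi2 h2 <-]; case/andP: (hb pi2 h2).
Qed.

Lemma val1s_le pi1 pi2 X s : strategy1 G pi1 -> strategy2 G pi2 ->
  val1_strat G pi1 X s <= PrReach G pi1 pi2 X s.
Proof.
move=> h1 h2; apply: (@inf_le _ _ 0); last by exists pi2.
by move=> z [p h <-]; case/andP: (PrReach_bounds X s h1 h).
Qed.

Definition attrF (gm : S -> M -> R) (X A : {set S}) : {set S} :=
  X :|: [set s | [forall b in Gam2 G s, [exists a, [exists t in A,
        0 < gm s a * delta G s a b t]]]].

Lemma attrF_mono gm X : {homo attrF gm X : A B / A \subset B}.
Proof.
move=> A B sAB /=. apply/fintype.subsetP => s; rewrite !inE; case/orP => [->//|H].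
apply/orP; right; apply/forall_inP => b hb.
have /existsP[a /exists_inP [t tA p]] := forall_inP H b hb.
by apply/existsP; exists a; apply/exists_inP; exists t; [exact: (fintype.subsetP sAB) | exact: p].
Qed.

Definition pw (gm : S -> M -> R) (x : S * M * M * S) : R :=
  gm x.1.1.1 x.1.1.2 * delta G x.1.1.1 x.1.1.2 x.1.2 x.2.

Definition cmin gm := \prod_(x | 0 < pw gm x) pw gm x.

Lemma pw_bounds gm x : selector1 G gm -> 0 <= pw gm x <= 1.
Proof.
move=> hg; rewrite /pw; apply/andP; split.
  by rewrite mulr_ge0 ?delta_ge0 ?(distr_ge0 (hg _)).
by rewrite mulr_ile1 ?delta_ge0 ?(distr_ge0 (hg _)) ?delta_le1 ?(distr_le1 _ (hg _)).
Qed.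

Lemma cmin_gt0 gm : 0 < cmin gm.
Proof. by apply: prodr_gt0. Qed.

Lemma cmin_le1 gm : selector1 G gm -> cmin gm <= 1.
Proof. by move=> hg; apply: prodr_ile1 => x _; apply: pw_bounds. Qed.

Lemma cmin_le gm s a b t : selector1 G gm -> 0 < gm s a * delta G s a b t ->
  cmin gm <= gm s a * delta G s a b t.
Proof.
move=> hg hp; rewrite /cmin (bigD1 (s, a, b, t)) //=.
apply: ler_piMr; first exact: ltW.
by apply: prodr_ile1 => x _; apply: pw_bounds.
Qed.

Lemma attr_lb gm pi2 X : selector1 G gm -> strategy2 G pi2 ->
  forall k h s, s \in iter k (attrF gm X) finset.set0 ->
  cmin gm ^+ k <= rw (memless gm) pi2 X k h s.
Proof.
move=> hg h2; have c0 := cmin_gt0 gm; have c1 := cmin_le1 hg.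
elim=> [|k IH] h s; first by rewrite inE.
rewrite iterS => hs /=; case: ifP => sX; first by rewrite exprn_ile1 // ltW.
move: hs; rewrite inE sX /= inE => hs.
rewrite /memless exchange_big /=.
rewrite -[X in X <= _]mul1r -(distr_sum (h2 h s)) mulr_suml.
apply: ler_sum => b _.
have hge : 0 <= \sum_a \sum_t gm s a * pi2 h s b * delta G s a b t *
    rw (memless gm) pi2 X k (rcons h s) t.
  apply: sumr_ge0 => a _; apply: sumr_ge0 => t _.
  rewrite !mulr_ge0 ?delta_ge0 ?(distr_ge0 (hg _)) ?(distr_ge0 (h2 _ _)) //.
  by case/andP: (rw_bounds X (memless_strat1 hg) h2 k (rcons h s) t).
case: (boolP (b \in Gam2 G s)) => bG; last first.
  by have [_ [h0 _]] := h2 h s; rewrite [in X in X <= _](h0 b bG) mul0r.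
have /existsP[a0 /exists_inP [t0 t0A p0]] := forall_inP hs b bG.
rewrite (bigD1 a0) //= (bigD1 t0) //= -addrA.
apply: (@le_trans _ _ (gm s a0 * pi2 h s b * delta G s a0 b t0 * rw (memless gm) pi2 X k (rcons h s) t0)); last first.
  rewrite lerDl addr_ge0 //.
    apply: sumr_ge0 => t _.
    rewrite !mulr_ge0 ?delta_ge0 ?(distr_ge0 (hg _)) ?(distr_ge0 (h2 _ _)) //.
    by case/andP: (rw_bounds X (memless_strat1 hg) h2 k (rcons h s) t).
  apply: sumr_ge0 => a _; apply: sumr_ge0 => t _.
  rewrite !mulr_ge0 ?delta_ge0 ?(distr_ge0 (hg _)) ?(distr_ge0 (h2 _ _)) //.
  by case/andP: (rw_bounds X (memless_strat1 hg) h2 k (rcons h s) t).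
have -> : gm s a0 * pi2 h s b * delta G s a0 b t0 * rw (memless gm) pi2 X k (rcons h s) t0
  = pi2 h s b * (rw (memless gm) pi2 X k (rcons h s) t0 * (gm s a0 * delta G s a0 b t0)) by ring.
rewrite exprSr; apply: ler_wpM2l; first exact: (distr_ge0 (h2 _ _)).
apply: ler_pM.
- by rewrite exprn_ge0 // ltW.
- exact: ltW.
- exact: IH.
- exact: cmin_le.
Qed.

Lemma dichot gm X : selector1 G gm ->
  (forall pi2, strategy2 G pi2 -> forall s, PrReach G (memless gm) pi2 X s = 1) \/
  exists (C : {set S}) (bs : S -> M), (exists s, s \in C) /\
    (forall s, s \in C -> s \notin X) /\ (forall s, bs s \in Gam2 G s) /\
    (forall s a t, s \in C -> 0 < gm s a -> 0 < delta G s a (bs s) t -> t \in C).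
Proof.
move=> hg; set F := attrF gm X.
have FP : F (fixset F) = fixset F := fixsetK (@attrF_mono gm X).
have XP : X \subset fixset F by rewrite -FP finset.subsetUl.
case: (boolP ([set: S] \subset fixset F)) => [sub|nsub].
  left => pi2 h2 s.
  set N := #|S|. set c := cmin gm.
  have h1 := memless_strat1 hg.
  have lb : forall h t, c ^+ N <= rw (memless gm) pi2 X N h t.
    move=> h t; apply: attr_lb => //.
    exact: (fintype.subsetP sub).
  have cN0 : 0 < c ^+ N := exprn_gt0 _ (cmin_gt0 gm).
  have cN1 : c ^+ N <= 1 := exprn_ile1 _ (ltW (cmin_gt0 gm)) (cmin_le1 hg).
  have hb0 : 0 <= 1 - c ^+ N by rewrite subr_ge0.
  have hbN : forall h t, 1 - rw (memless gm) pi2 X N h t <= 1 - c ^+ N.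
    by move=> h t; rewrite lerB.
  apply: (@lim_one _ (1 - c ^+ N)) => //.
  - by rewrite ltrBlDr ltrDl.
  - by case/andP: (PrReach_bounds X s h1 h2).
  move=> k; have := amp_iter h1 h2 hb0 hbN k [::] s.
  have : rw (memless gm) pi2 X (k * N) [::] s <= PrReach G (memless gm) pi2 X s.
    apply: (@sup_ge _ _ 1); last by exists (k * N)%N.
    by move=> z [n _ <-]; case/andP: (rw_bounds X h1 h2 n [::] s).
  move=> hle hk; apply: le_trans hle; rewrite lerBlDr addrC -lerBlDr.
  by apply: le_trans hk; rewrite lexx.
right.
have [s0 _ s0n] := fintype.subsetPn nsub.
have hb : forall s, exists b, b \in Gam2 G s /\ (s \notin fixset F ->
    forall a t, 0 < gm s a -> 0 < delta G s a b t -> t \notin fixset F).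
  move=> s; case: (boolP (s \in fixset F)) => sP.
    by have /set0Pn [b bG] := Gam2_nonempty G s; exists b; split; rewrite ?sP.
  move: (sP); rewrite -{1}FP /F /attrF !inE negb_or => /andP [sX /forall_inPn [b bG nex]].
  exists b; split => // _ a t ga dt; apply/negP => tP; apply: (negP nex).
  by apply/existsP; exists a; apply/exists_inP; exists t => //; exact: mulr_gt0.
have [bs hbs] := choice hb.
exists (~: fixset F), bs; split; first by exists s0; rewrite inE.
split; first by move=> s; rewrite inE; apply: contra => sX; exact: (fintype.subsetP XP).
split; first by move=> s; case: (hbs s).
by move=> s a t; rewrite !inE => sP ga dt; exact: (proj2 (hbs s) sP a t ga dt).
Qed.

Lemma dev gm (X : {set S}) bs : selector1 G gm -> (forall s, bs s \in Gam2 G s) ->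
  forall s, s \notin X ->
  val1_strat G (memless gm) X s <=
  \sum_a \sum_t gm s a * delta G s a (bs s) t * val1_strat G (memless gm) X t.
Proof.
move=> hg hb s sX; set v := val1_strat G (memless gm) X.
have h1 := memless_strat1 hg.
have vb : forall t, 0 <= v t <= 1 := fun t => val1s_bounds X t h1.
have w0 : forall a t, 0 <= gm s a * delta G s a (bs s) t.
  by move=> a t; rewrite mulr_ge0 ?delta_ge0 ?(distr_ge0 (hg _)).
have Pre0 : 0 <= \sum_a \sum_t gm s a * delta G s a (bs s) t * v t.
  apply: sumr_ge0 => a _; apply: sumr_ge0 => t _; rewrite mulr_ge0 //.
  by case/andP: (vb t).
apply/ler_addgt0Pr => e e0.
have hP : forall t, exists pi2, strategy2 G pi2 /\ PrReach G (memless gm) pi2 X t < v t + e.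
  move=> t; have [p2 hp2] := ex_strat2.
  have hi : has_inf [set PrReach G (memless gm) pi2 X t | pi2 in strategy2 G].
    split; first by exists (PrReach G (memless gm) p2 X t); exists p2.
    by exists 0 => z [p h <-]; case/andP: (PrReach_bounds X t h1 h).
  have [z [pi2 h2 <-] hz] := inf_adherent e0 hi.
  by exists pi2.
have [P hPP] := choice hP.
pose pi2' := fun (h : seq S) (y : S) => match h with
  | [::] => dir bs y | _ :: h' => P (head y h') h' y end.
have h2' : strategy2 G pi2'.
  by move=> [|x h'] y /=; [apply: dir_sel | case: (hPP (head y h'))].
have shift : forall n x h' y, rw (memless gm) pi2' X n (x :: h') y =
    rw (memless gm) (P (head y h')) X n h' y.
  elim=> [|n IH] x h' y //=; case: ifP => // _.
  apply: eq_bigr => a _; apply: eq_bigr => b _; apply: eq_bigr => t _.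
  rewrite ?rcons_cons IH; case: h' => [|? ?]; reflexivity.
apply: le_trans (val1s_le X s h1 h2') _.
apply: ge_sup; first by exists (rw (memless gm) pi2' X 0 [::] s); exists 0%N.
move=> z [[|n] _ <-] /=; rewrite (negbTE sX); first by rewrite addr_ge0 // ltW.
rewrite /memless /pi2' sum_dir.
apply: (@le_trans _ _ (\sum_a \sum_t gm s a * delta G s a (bs s) t * (v t + e))).
  apply: ler_sum => a _; apply: ler_sum => t _; apply: ler_wpM2l => //.
  rewrite -/pi2' shift /=.
  apply: le_trans (ltW (proj2 (hPP t))).
  apply: (@sup_ge _ _ 1); last by exists n.
  by move=> y [m _ <-]; case/andP: (rw_bounds X h1 (proj1 (hPP t)) m [::] t).
have E2 : \sum_a \sum_t gm s a * delta G s a (bs s) t * e = e.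
  transitivity ((\sum_a \sum_t gm s a * delta G s a (bs s) t) * e).
    by rewrite mulr_suml; apply: eq_bigr => a _; rewrite mulr_suml.
  by rewrite wsum2 ?mul1r // (distr_sum (hg s)).
rewrite -[X in _ <= _ + X]E2 -big_split /=; apply: ler_sum => a _; rewrite -big_split /=.
by apply: ler_sum => t _; rewrite mulrDr.
Qed.

Lemma unif_sel1 : selector1 G (unif_sel G).
Proof.
move=> s; split; [|split].
- by move=> a; rewrite /unif_sel; case: ifP => // _; rewrite invr_ge0 ler0n.
- by move=> a /negbTE; rewrite /unif_sel => ->.
rewrite /unif_sel -big_mkcond /= sumr_const.
have hk : (#|Gam1 G s|%:R : R) != 0.
  by rewrite pnatr_eq0 -lt0n finset.card_gt0 Gam1_nonempty.
set k := (#|Gam1 G s|%:R : R) in hk *.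
by rewrite -mulr_natl -/k mulfV.
Qed.

Lemma unif_pos s a : a \in Gam1 G s -> 0 < unif_sel G s a.
Proof.
by move=> aG; rewrite /unif_sel aG invr_gt0 ltr0n finset.card_gt0 Gam1_nonempty.
Qed.

Lemma avg_le gm s bs m (v : S -> R) : selector1 G gm ->
  (forall a t, 0 < gm s a -> 0 < delta G s a (bs s) t -> v t <= m) ->
  \sum_a \sum_t gm s a * delta G s a (bs s) t * v t <= m.
Proof.
move=> hg H.
rewrite -[X in _ <= X]mul1r -(wsum2 s (bs s) (distr_sum (hg s))) mulr_suml.
apply: ler_sum => a _; rewrite mulr_suml; apply: ler_sum => t _.
case: (eqVneq (gm s a) 0) => [->|ga]; first by rewrite !mul0r.
case: (eqVneq (delta G s a (bs s) t) 0) => [->|da]; first by rewrite mulr0 !mul0r.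
apply: ler_wpM2l; first by rewrite mulr_ge0 ?delta_ge0 ?(distr_ge0 (hg _)).
by apply: (H a); rewrite lt0r ?ga ?da ?(distr_ge0 (hg _)) ?delta_ge0.
Qed.

Lemma avg_eq gm s bs m (v : S -> R) : selector1 G gm ->
  (forall a t, 0 < gm s a -> 0 < delta G s a (bs s) t -> v t <= m) ->
  m <= \sum_a \sum_t gm s a * delta G s a (bs s) t * v t ->
  forall a t, 0 < gm s a -> 0 < delta G s a (bs s) t -> v t = m.
Proof.
move=> hg H hm.
set f := fun a t => gm s a * delta G s a (bs s) t * (m - v t).
have f0 : forall a t, 0 <= f a t.
  move=> a t; rewrite /f.
  case: (eqVneq (gm s a) 0) => [->|ga]; first by rewrite !mul0r.
  case: (eqVneq (delta G s a (bs s) t) 0) => [->|da]; first by rewrite mulr0 !mul0r.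
  rewrite mulr_ge0 ?mulr_ge0 ?delta_ge0 ?(distr_ge0 (hg _)) // subr_ge0.
  by apply: (H a); rewrite lt0r ?ga ?da ?(distr_ge0 (hg _)) ?delta_ge0.
have sf : \sum_a \sum_t f a t = m - \sum_a \sum_t gm s a * delta G s a (bs s) t * v t.
  rewrite -[X in X - _]mul1r -(wsum2 s (bs s) (distr_sum (hg s))) mulr_suml -sumrB.
  apply: eq_bigr => a _; rewrite mulr_suml -sumrB; apply: eq_bigr => t _.
  by rewrite /f mulrBr.
have s0 : \sum_a \sum_t f a t = 0.
  apply/le_anti/andP; split; first by rewrite sf subr_le0.
  by apply: sumr_ge0 => a _; apply: sumr_ge0 => t _.
move=> a t ga dt.
have sa : \sum_t f a t = 0.
  by apply: (psumr_eq0P _ s0) => // b _; apply: sumr_ge0 => u _.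
have fat : f a t = 0 by apply: (psumr_eq0P _ sa).
move/eqP: fat; rewrite /f mulf_eq0 => /orP [|]; last by rewrite subr_eq0 => /eqP ->.
by rewrite mulf_eq0 => /orP [] /eqP h; [move: ga | move: dt]; rewrite h ltxx.
Qed.
End Game.

Theorem lemma7 (R : realType) (S M : finType) (G : cgame R S M) (T : {set S})
  (absT : forall s, s \in T :|: W2 G T -> absorbing G s)
  (gam : nat -> S -> M -> R)
  (gam0 : gam 0%N = unif_sel G)
  (gamS : forall i, improve_step G T (gam i) (gam i.+1)) :
  forall i, proper_sel G T (gam i).
Proof.
set X := T :|: W2 G T.
have sel : forall i, selector1 G (gam i).
  elim=> [|i IH]; first by rewrite gam0; apply: unif_sel1.
  have [xi1 [hxi [_ [hout hin]]]] := gamS i.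
  move=> s; case: (boolP (s \in improv G T (vof G T (gam i)))) => sI.
    by rewrite (hin s sI); apply: hxi.
  by rewrite (hout s sI); apply: IH.
have XT : forall s, s \notin X -> s \notin T.
  by move=> s; rewrite inE negb_or => /andP [].
elim=> [|i IH].
  rewrite gam0.
  have [H|[C [bs [[s0 s0C] [hCX [hbs hcl]]]]]] := dichot X (unif_sel1 G).
    by move=> pi2 h2 s _; exact: H.
  exfalso; have s0X := hCX s0 s0C; apply: (negP s0X).
  rewrite /X inE; apply/orP; right; rewrite inE; apply/eqP.
  have hu := memless_strat1 (unif_sel1 G).
  apply/le_anti/andP; split.
    apply: ge_sup.
      by exists (val1_strat G (memless (unif_sel G)) T s0); exists (memless (unif_sel G)).
    move=> z [pi1 h1 <-].
    apply: le_trans (val1s_le T s0 h1 (memless_strat2 (dir_sel hbs))) _.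
    apply: PrReach_zero => n.
    apply: (trap_zero (C := C) (gm := unif_sel G)) => //.
      by move=> s sC; apply: XT; apply: hCX.
    move=> h s a sC pa; case: (boolP (a \in Gam1 G s)) => aG; first exact: unif_pos.
    by have [_ [h0 _]] := h1 h s; rewrite h0 ?eqxx in pa.
  apply: le_trans (_ : val1_strat G (memless (unif_sel G)) T s0 <= _).
    by case/andP: (val1s_bounds T s0 hu).
  apply: (@sup_ge _ _ 1); last by exists (memless (unif_sel G)).
  by move=> z [pi1 h1 <-]; case/andP: (val1s_bounds T s0 h1).
have [H|[C [bs [[s0 s0C] [hCX [hbs hcl]]]]]] := dichot X (sel i.+1).
  by move=> pi2 h2 s _; exact: H.
exfalso.
have [xi1 [hxi [hpre [hout hin]]]] := gamS i.
set v := vof G T (gam i) in hpre hout hin.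
have hvi := memless_strat1 (sel i).
have vb : forall t, 0 <= v t <= 1 := fun t => val1s_bounds T t hvi.
set s1 := [arg max_(s > s0 in C) v s]%O.
have [s1C s1max] : s1 \in C /\ forall s, s \in C -> v s <= v s1.
  by rewrite /s1; case: arg_maxP => //= j jC hj; split => // s sC; exact: hj.
set m := v s1.
set Ms := [set s in C | v s == m].
have key : forall s, s \in Ms ->
    forall a t, 0 < gam i s a -> 0 < delta G s a (bs s) t -> t \in Ms.
  move=> s; rewrite inE => /andP [sC /eqP vs].
  have sT : s \notin T by apply: XT; apply: hCX.
  have hle : forall a t, 0 < gam i.+1 s a -> 0 < delta G s a (bs s) t -> v t <= m.
    by move=> a t ga dt; apply: s1max; exact: (hcl s a t sC ga dt).
  have sI : s \notin improv G T v.
    apply/negP => sI; have := sI; rewrite inE => /andP [_ lt].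
    rewrite -(hpre s sI) in lt.
    have h12 : Pre1_sel G xi1 v s <= Pre12 G xi1 (@dir R S M bs) v s.
      rewrite /Pre1_sel; apply: (@inf_le _ _ 0); last by exists (@dir R S M bs) => //; exact: dir_sel.
      move=> z [xi2 h2 <-].
      apply: sumr_ge0 => a _; apply: sumr_ge0 => b _; apply: sumr_ge0 => t _.
      rewrite !mulr_ge0 ?delta_ge0 ?(distr_ge0 (hxi _)) ?(distr_ge0 (h2 _)) //.
      by case/andP: (vb t).
    have E : Pre12 G xi1 (@dir R S M bs) v s =
        \sum_a \sum_t gam i.+1 s a * delta G s a (bs s) t * v t.
      rewrite /Pre12 (hin s sI); apply: eq_bigr => a _.
      rewrite (bigD1 (bs s)) //= [X in _ + X]big1 ?addr0.
        by apply: eq_bigr => t _; rewrite /dir eqxx mulr1; ring.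
      by move=> b /negbTE nb; apply: big1 => t _; rewrite /dir nb mulr0.
    have := avg_le (sel i.+1) hle; rewrite -E.
    move: lt h12; rewrite vs; set p := Pre1_sel _ _ _ _; set q := Pre12 _ _ _ _ _.
    move=> lt h12 h3; have := lt_le_trans lt (le_trans h12 h3); by rewrite ltxx.
  have gs : gam i.+1 s = gam i s := hout s sI.
  have hdev := dev (sel i) hbs sT.
  rewrite -/(vof G T (gam i)) -/v -gs in hdev.
  have hm : m <= \sum_a \sum_t gam i.+1 s a * delta G s a (bs s) t * v t by rewrite -vs.
  have heq := avg_eq (sel i.+1) hle hm.
  move=> a t ga dt; rewrite -gs in ga.
  by rewrite inE (hcl s a t sC ga dt) /= (heq a t ga dt) eqxx.
have hMX : forall s, s \in Ms -> s \notin X.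
  by move=> s; rewrite inE => /andP [sC _]; apply: hCX.
have s1M : s1 \in Ms by rewrite inE s1C eqxx.
have := IH (memless (@dir R S M bs)) (memless_strat2 (dir_sel hbs)) s1 (hMX s1 s1M).
have : PrReach G (memless (gam i)) (memless (@dir R S M bs)) X s1 <= 0.
  apply: PrReach_zero => n.
  have := trap_zero (X:=X) (C := Ms) (gm := gam i) (pi1 := memless (gam i)) hMX (fun s a t sM => key s sM a t). move=> tz; apply: tz => //.
  move=> h s a _ pa; rewrite /memless in pa.
  by rewrite lt0r pa (distr_ge0 (sel i s)).
move=> h0 h1; move: h0; rewrite h1 leNgt ltr01 //.
Qed.
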